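(* Let $F$ be any function from syntax trees to the reals that takes at most $k$ distinct values, and let $T_{init}$ be the number of nodes of the initial tree. Then for both SMO-GP-single and SMO-GP-multi applied to MO-$F(X)=(F(X),C(X))$, the expected number of iterations until the population contains the empty tree is $O(k\,T_{init})$.
   Context: Fix an integer $n\ge 1$; the terminal set is $T=\{x_1,\bar x_1,\dots,x_n,\bar x_n\}$. A syntax tree is either the empty tree or a rooted ordered binary tree whose inner nodes are all labelled by the binary function $J$ (join, exactly two ordered children) and whose leaves are labelled by elements of $T$. The complexity $C(X)$ is the number of nodes of $X$ (0 for the empty tree). In MO-$F$, $F$ is to be maximized and $C$ minimized. Mutation (HVL-Prime applied $k'$ times): each application chooses uniformly at random one of three operations. Substitute: replace a uniformly random leaf by a uniformly random $u\in T$. Insert: choose a uniformly random node $v$ and uniformly random $u\in T$, replace $v$ by a $J$-node with children $u$ and $v$ in uniformly random order (inserting into the empty tree yields the single leaf $u$). Delete: choose a uniformly random leaf $v$ with parent $p$ and sibling $u$, replace $p$ by $u$ (deleting $p$ and $v$; deleting the only leaf of a one-leaf tree yields the empty tree). For single-operation mutation $k'=1$; for multi-operation mutation $k'=1+\mathrm{Pois}(1)$ with $\mathrm{Pois}(1)$ a Poisson random variable with mean 1. Dominance: $Y\succeq X$ iff $F(Y)\ge F(X)$ and $C(Y)\le C(X)$; $Y\succ X$ iff $Y\succeq X$ and ($F(Y)>F(X)$ or $C(Y)<C(X)$). SMO-GP: choose an initial tree $X$ and set $P:=\{X\}$; repeat: choose $X\in P$ uniformly at random, let $Y$ be a mutated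 copy of $X$; if no $Z\in P$ satisfies $Z\succ Y$, set $P:=(P\setminus\{Z\in P: Y\succeq Z\})\cup\{Y\}$. SMO-GP-single uses single-operation mutation, SMO-GP-multi multi-operation mutation. *)

(* Defs.v *)
From Stdlib Require Import Reals List Arith Lia Lra.
Import ListNotations.
Open Scope R_scope.

(* A literal (i, true) is x_{i+1}, (i, false) is its negation; valid iff i < n. *)
Definition lit : Type := (nat * bool)%type.

Inductive tree : Type :=
| Leaf (u : lit)
| Join (l r : tree).

(* A syntax tree is either empty (None) or a non-empty tree. *)
Definition stree : Type := option tree.

Fixpoint tsize (t : tree) : nat :=
  match t with Leaf _ => 1%nat | Join l r => S (tsize l + tsize r) end.

Definition cplx (X : stree) : nat :=
  match X with None => 0%nat | Some t => tsize t end.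

Fixpoint tvalid (n : nat) (t : tree) : Prop :=
  match t with
  | Leaf (i, _) => (i < n)%nat
  | Join l r => tvalid n l /\ tvalid n r
  end.

Definition valid (n : nat) (X : stree) : Prop :=
  match X with None => True | Some t => tvalid n t end.

Definition lits (n : nat) : list lit :=
  flat_map (fun i => [(i, true); (i, false)]) (seq 0 n).

Fixpoint subs (t : tree) (u : lit) : list tree :=
  match t with
  | Leaf _ => [Leaf u]
  | Join l r => map (fun l' => Join l' r) (subs l u) ++ map (Join l) (subs r u)
  end.

Fixpoint ins (t : tree) (u : lit) : list tree :=
  [Join (Leaf u) t; Join t (Leaf u)] ++
  match t with
  | Leaf _ => []
  | Join l r => map (fun l' => Join l' r) (ins l u) ++ map (Join l) (ins r u)
  end.

Fixpoint del (t : tree) : list tree :=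
  match t with
  | Leaf _ => []
  | Join l r =>
      (match l with Leaf _ => [r] | _ => map (fun l' => Join l' r) (del l) end) ++
      (match r with Leaf _ => [l] | _ => map (Join l) (del r) end)
  end.

Definition dist (A : Type) : Type := list (R * A).

Definition dret {A} (x : A) : dist A := [(1, x)].

Definition uniform {A} (l : list A) : dist A :=
  map (fun x => (/ INR (length l), x)) l.

Definition dscale {A} (c : R) (d : dist A) : dist A :=
  map (fun px => (c * fst px, snd px)) d.

Definition dbind {A B} (d : dist A) (f : A -> dist B) : dist B :=
  flat_map (fun px => dscale (fst px) (f (snd px))) d.

Definition dmap {A B} (f : A -> B) (d : dist A) : dist B :=
  map (fun px => (fst px, f (snd px))) d.

Definition substitute_d (n : nat) (X : stree) : dist stree :=
  match X with
  | None => dret None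
  | Some t => uniform (flat_map (fun u => map Some (subs t u)) (lits n))
  end.

Definition insert_d (n : nat) (X : stree) : dist stree :=
  match X with
  | None => uniform (map (fun u => Some (Leaf u)) (lits n))
  | Some t => uniform (flat_map (fun u => map Some (ins t u)) (lits n))
  end.

Definition delete_d (X : stree) : dist stree :=
  match X with
  | None => dret None
  | Some (Leaf _) => dret None
  | Some t => uniform (map Some (del t))
  end.

Definition hvl (n : nat) (X : stree) : dist stree :=
  dscale (1/3) (substitute_d n X) ++ dscale (1/3) (insert_d n X) ++
  dscale (1/3) (delete_d X).

Fixpoint hvl_iter (n m : nat) (X : stree) : dist stree :=
  match m with
  | O => dret X
  | S m' => dbind (hvl_iter n m' X) (hvl n)
  end.

Inductive algo : Type := Single | Multi.

(* Mutation distribution.  For Multi, k' = 1 + Pois(1), i.e. P(k' = j+1) =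
   e^{-1}/j!; the Poisson variable is truncated to j <= J, giving a
   sub-distribution.  For Single, J is irrelevant. *)
Definition mutate (a : algo) (n J : nat) (X : stree) : dist stree :=
  match a with
  | Single => hvl n X
  | Multi =>
      flat_map (fun j => dscale (exp (-1) / INR (fact j)) (hvl_iter n (S j) X))
               (seq 0 (S J))
  end.

Definition Rleb (x y : R) : bool := if Rle_dec x y then true else false.
Definition Rltb (x y : R) : bool := if Rlt_dec x y then true else false.

Definition wdom (F : stree -> R) (Y X : stree) : bool :=
  Rleb (F X) (F Y) && Nat.leb (cplx Y) (cplx X).

Definition sdom (F : stree -> R) (Y X : stree) : bool :=
  wdom F Y X && (Rltb (F X) (F Y) || Nat.ltb (cplx Y) (cplx X)).

Definition update (F : stree -> R) (P : list stree) (Y : stree) : list stree :=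
  if existsb (fun Z => sdom F Z Y) P then P
  else Y :: filter (fun Z => negb (wdom F Y Z)) P.

Definition step (a : algo) (n J : nat) (F : stree -> R) (P : list stree)
  : dist (list stree) :=
  dbind (uniform P) (fun X => dmap (update F P) (mutate a n J X)).

Definition has_empty (P : list stree) : bool :=
  existsb (fun X => match X with None => true | Some _ => false end) P.

(* probability that after t iterations started from P the population has
   not yet contained the empty tree (w.r.t. the J-truncated kernel) *)
Fixpoint pnothit (a : algo) (n J : nat) (F : stree -> R) (t : nat)
         (P : list stree) : R :=
  if has_empty P then 0 else
  match t with
  | O => 1
  | S t' => fold_right Rplus 0
              (map (fun pq => fst pq * pnothit a n J F t' (snd pq))
                   (step a n J F P))
  end.

(* E[tau] <= B, where tau is the number of iterations until the population
   contains the empty tree, started from P = {X0}.  Since E[tau] =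
   sum_t P(tau > t) and the truncated probabilities increase to the true ones
   as J -> infinity, E[tau] <= B iff all these finite partial sums are <= B. *)
Definition expected_hit_le (a : algo) (n : nat) (F : stree -> R) (X0 : stree)
           (B : R) : Prop :=
  forall J T : nat,
    fold_right Rplus 0 (map (fun t => pnothit a n J F t [X0]) (seq 0 T)) <= B.

Definition at_most_k_values (n : nat) (F : stree -> R) (k : nat) : Prop :=
  exists vals : list R, (length vals <= k)%nat /\
    forall X, valid n X -> In (F X) vals.

(* Main.v *)
Require Import Defs.
From Stdlib Require Import Reals List Arith Lia Lra.
Import ListNotations.
Open Scope R_scope.

Definition sumR (l : list R) : R := fold_right Rplus 0 l.

Lemma sumR_app l1 l2 : sumR (l1 ++ l2) = sumR l1 + sumR l2.
Proof. induction l1; simpl; [ring|]. unfold sumR in *; simpl; rewrite IHl1; ring. Qed.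

Lemma sumR_le {A} (l : list A) f g :
  (forall x, In x l -> f x <= g x) -> sumR (map f l) <= sumR (map g l).
Proof. induction l; simpl; intros H; [lra|]. unfold sumR in *; simpl.
  apply Rplus_le_compat; auto. Qed.

Lemma sumR_nonneg {A} (l : list A) f :
  (forall x, In x l -> 0 <= f x) -> 0 <= sumR (map f l).
Proof. induction l; simpl; intros H; unfold sumR in *; simpl; [lra|].
  apply Rplus_le_le_0_compat; auto. Qed.

Lemma sumR_in {A} (l : list A) f x :
  In x l -> (forall y, In y l -> 0 <= f y) -> f x <= sumR (map f l).
Proof. induction l; simpl; intros Hx H; [tauto|]. unfold sumR in *; simpl.
  destruct Hx as [<-|Hx].
  - assert (0 <= fold_right Rplus 0 (map f l)) by (apply sumR_nonneg; auto). lra.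
  - assert (0 <= f a) by auto. specialize (IHl Hx (fun y Hy => H y (or_intror Hy))). lra.
Qed.

Lemma sumR_scale {A} (l : list A) f c :
  sumR (map (fun x => c * f x) l) = c * sumR (map f l).
Proof. induction l; unfold sumR in *; simpl; [ring|]. rewrite IHl; ring. Qed.

Lemma sumR_plus {A} (l : list A) f g :
  sumR (map (fun x => f x + g x) l) = sumR (map f l) + sumR (map g l).
Proof. induction l; unfold sumR in *; simpl; [ring|]. rewrite IHl; ring. Qed.

Lemma sumR_minus {A} (l : list A) f g :
  sumR (map (fun x => f x - g x) l) = sumR (map f l) - sumR (map g l).
Proof. induction l; unfold sumR in *; simpl; [ring|]. rewrite IHl; ring. Qed.

Lemma sumR_ext {A} (l : list A) f g :
  (forall x, f x = g x) -> sumR (map f l) = sumR (map g l).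
Proof. intros H; f_equal; apply map_ext; auto. Qed.

Lemma sumR_const {A} (l : list A) : sumR (map (fun _ => 1) l) = INR (length l).
Proof. induction l; unfold sumR in *; simpl; [reflexivity|]. rewrite IHl.
  destruct (length l); simpl; ring. Qed.

Lemma sumR_swap {A B} (l1 : list A) (l2 : list B) (g : A -> B -> R) :
  sumR (map (fun a => sumR (map (g a) l2)) l1) =
  sumR (map (fun b => sumR (map (fun a => g a b) l1)) l2).
Proof. induction l1; simpl.
  - unfold sumR at 1; simpl. induction l2; unfold sumR in *; simpl; [ring|]. rewrite <- IHl2; ring.
  - unfold sumR at 1; simpl. fold (sumR (map (fun a0 => sumR (map (g a0) l2)) l1)).
    rewrite IHl1. rewrite <- sumR_plus. reflexivity.
Qed.

Definition E {A} (d : Defs.dist A) (h : A -> R) : R :=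
  sumR (map (fun pq => fst pq * h (snd pq)) d).

Definition nonneg {A} (d : Defs.dist A) := forall pq, In pq d -> 0 <= fst pq.
Definition Sup {A} (d : Defs.dist A) (Q : A -> Prop) := forall pq, In pq d -> Q (snd pq).

Lemma E_app {A} (d1 d2 : Defs.dist A) h : E (d1 ++ d2) h = E d1 h + E d2 h.
Proof. unfold E; rewrite map_app, sumR_app; reflexivity. Qed.

Lemma E_dscale {A} c (d : Defs.dist A) h : E (dscale c d) h = c * E d h.
Proof. unfold E, dscale. rewrite map_map. simpl.
  rewrite <- sumR_scale. apply sumR_ext; intros; ring. Qed.

Lemma E_flat_map {A B} (l : list B) (f : B -> Defs.dist A) h :
  E (flat_map f l) h = sumR (map (fun x => E (f x) h) l).
Proof. induction l; simpl; [reflexivity|]. rewrite E_app, IHl. reflexivity. Qed.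

Lemma E_dbind {A B} (d : Defs.dist A) (f : A -> Defs.dist B) h :
  E (dbind d f) h = E d (fun x => E (f x) h).
Proof. unfold dbind. rewrite E_flat_map. unfold E at 2.
  apply sumR_ext; intros; apply E_dscale. Qed.

Lemma E_dmap {A B} (f : A -> B) (d : Defs.dist A) h : E (dmap f d) h = E d (fun x => h (f x)).
Proof. unfold E, dmap; rewrite map_map; reflexivity. Qed.

Lemma E_uniform {A} (l : list A) h : E (uniform l) h = / INR (length l) * sumR (map h l).
Proof. unfold E, uniform; rewrite map_map; simpl. apply sumR_scale. Qed.

Lemma E_dret {A} (x : A) h : E (dret x) h = h x.
Proof. unfold E, dret, sumR; simpl; ring. Qed.

Lemma E_mono {A} (d : Defs.dist A) h1 h2 :
  nonneg d -> Sup d (fun x => h1 x <= h2 x) -> E d h1 <= E d h2.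
Proof. intros H1 H2. apply sumR_le. intros pq Hpq.
  apply Rmult_le_compat_l; auto. Qed.

Lemma E_nonneg {A} (d : Defs.dist A) h :
  nonneg d -> Sup d (fun x => 0 <= h x) -> 0 <= E d h.
Proof. intros H1 H2. apply sumR_nonneg. intros pq Hpq.
  apply Rmult_le_pos; auto. Qed.

Lemma E_scale {A} (d : Defs.dist A) h c : E d (fun x => c * h x) = c * E d h.
Proof. unfold E. rewrite <- sumR_scale. apply sumR_ext; intros; ring. Qed.

Lemma E_minus {A} (d : Defs.dist A) h1 h2 : E d (fun x => h1 x - h2 x) = E d h1 - E d h2.
Proof. unfold E. rewrite <- sumR_minus. apply sumR_ext; intros; ring. Qed.

Lemma nonneg_app {A} (d1 d2 : Defs.dist A) : nonneg d1 -> nonneg d2 -> nonneg (d1 ++ d2).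
Proof. unfold nonneg; intros H1 H2 pq Hin; apply in_app_or in Hin; destruct Hin; auto. Qed.
Lemma Sup_app {A} (d1 d2 : Defs.dist A) Q : Sup d1 Q -> Sup d2 Q -> Sup (d1 ++ d2) Q.
Proof. unfold Sup; intros H1 H2 pq Hin; apply in_app_or in Hin; destruct Hin; auto. Qed.
Lemma nonneg_dscale {A} c (d : Defs.dist A) : 0 <= c -> nonneg d -> nonneg (dscale c d).
Proof. unfold nonneg, dscale; intros Hc H pq Hin. apply in_map_iff in Hin.
  destruct Hin as [x [<- Hx]]; simpl. apply Rmult_le_pos; auto. Qed.
Lemma Sup_dscale {A} c (d : Defs.dist A) Q : Sup d Q -> Sup (dscale c d) Q.
Proof. unfold Sup, dscale; intros H pq Hin. apply in_map_iff in Hin.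
  destruct Hin as [x [<- Hx]]; simpl. auto. Qed.
Lemma nonneg_dbind {A B} (d : Defs.dist A) (f : A -> Defs.dist B) :
  nonneg d -> (forall x, nonneg (f x)) -> nonneg (dbind d f).
Proof. unfold dbind; intros H1 H2 pq Hin. apply in_flat_map in Hin.
  destruct Hin as [px [Hpx Hin]]. apply nonneg_dscale in Hin; auto. Qed.
Lemma Sup_dbind {A B} (d : Defs.dist A) (f : A -> Defs.dist B) Q :
  Sup d (fun x => Sup (f x) Q) -> Sup (dbind d f) Q.
Proof. unfold dbind; intros H1 pq Hin. apply in_flat_map in Hin.
  destruct Hin as [px [Hpx Hin]]. exact (Sup_dscale _ _ _ (H1 _ Hpx) pq Hin). Qed.
Lemma nonneg_dmap {A B} (f : A -> B) d : nonneg d -> nonneg (dmap f d).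
Proof. unfold nonneg, dmap; intros H pq Hin. apply in_map_iff in Hin.
  destruct Hin as [x [<- Hx]]; simpl; auto. Qed.
Lemma Sup_dmap {A B} (f : A -> B) d Q : Sup d (fun x => Q (f x)) -> Sup (dmap f d) Q.
Proof. unfold Sup, dmap; intros H pq Hin. apply in_map_iff in Hin.
  destruct Hin as [x [<- Hx]]; simpl; auto. Qed.
Lemma nonneg_uniform {A} (l : list A) : nonneg (uniform l).
Proof. unfold nonneg, uniform; intros pq Hin. apply in_map_iff in Hin.
  destruct Hin as [x [<- Hx]]; simpl. apply Rlt_le, Rinv_0_lt_compat, lt_0_INR.
  destruct l; simpl in *; [tauto| lia]. Qed.
Lemma Sup_uniform {A} (l : list A) Q : (forall x, In x l -> Q x) -> Sup (uniform l) Q.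
Proof. unfold Sup, uniform; intros H pq Hin. apply in_map_iff in Hin.
  destruct Hin as [x [<- Hx]]; simpl; auto. Qed.
Lemma nonneg_dret {A} (x : A) : nonneg (dret x).
Proof. unfold nonneg, dret; simpl; intros pq [<-|[]]; simpl; lra. Qed.
Lemma Sup_dret {A} (x : A) (Q : A -> Prop) : Q x -> Sup (dret x) Q.
Proof. unfold Sup, dret; simpl; intros H pq [<-|[]]; simpl; auto. Qed.
Lemma nonneg_flat_map {A B} (l : list B) (f : B -> Defs.dist A) :
  (forall x, In x l -> nonneg (f x)) -> nonneg (flat_map f l).
Proof. intros H pq Hin. apply in_flat_map in Hin. destruct Hin as [x [Hx Hin]].
  exact (H x Hx pq Hin). Qed.
Lemma Sup_flat_map {A B} (l : list B) (f : B -> Defs.dist A) Q :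
  (forall x, In x l -> Sup (f x) Q) -> Sup (flat_map f l) Q.
Proof. intros H pq Hin. apply in_flat_map in Hin. destruct Hin as [x [Hx Hin]].
  exact (H x Hx pq Hin). Qed.

Lemma mass_uniform {A} (l : list A) : E (uniform l) (fun _ => 1) <= 1.
Proof. rewrite E_uniform, sumR_const. destruct l as [|x l].
  - simpl; rewrite Rmult_0_r; lra.
  - rewrite Rinv_l; [lra|]. apply not_0_INR. simpl; lia. Qed.

Lemma E_sup_le {A} (d : Defs.dist A) h (b : R) :
  nonneg d -> E d (fun _ => 1) <= 1 -> 0 <= b -> Sup d (fun x => h x <= b) -> E d h <= b.
Proof. intros H1 H2 H3 H4. apply Rle_trans with (E d (fun _ => b)).
  - apply E_mono; auto.
  - replace (E d (fun _ => b)) with (b * E d (fun _ => 1)).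
    + rewrite <- (Rmult_1_r b) at 2. apply Rmult_le_compat_l; auto.
    + rewrite <- E_scale. unfold E; apply sumR_ext; intros; ring.
Qed.

Lemma sumR_ext_in {A} (l : list A) f g :
  (forall x, In x l -> f x = g x) -> sumR (map f l) = sumR (map g l).
Proof. intros H; f_equal; apply map_ext_in; auto. Qed.

Lemma lits_valid n u : In u (lits n) -> tvalid n (Leaf u).
Proof. unfold lits. intros H. apply in_flat_map in H. destruct H as [i [Hi Hu]].
  apply in_seq in Hi. simpl in Hu. destruct Hu as [<-|[<-|[]]]; simpl; lia. Qed.

Lemma subs_valid n t u : tvalid n t -> tvalid n (Leaf u) ->
  forall t', In t' (subs t u) -> tvalid n t'.
Proof. induction t as [v|l IHl r IHr]; simpl; intros Ht Hu t' Hin.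
  - destruct Hin as [<-|[]]; auto.
  - destruct Ht as [Hl Hr]. apply in_app_or in Hin. destruct Hin as [Hin|Hin];
    apply in_map_iff in Hin; destruct Hin as [x [<- Hx]]; simpl; split; auto.
Qed.

Lemma ins_valid n t u : tvalid n t -> tvalid n (Leaf u) ->
  forall t', In t' (ins t u) -> tvalid n t'.
Proof. induction t as [v|l IHl r IHr]; simpl; intros Ht Hu t' Hin.
  - destruct Hin as [<-|[<-|[]]]; simpl; auto.
  - destruct Hin as [<-|[<-|Hin]]; [simpl; auto|simpl; auto|].
    destruct Ht as [Hl Hr]. apply in_app_or in Hin. destruct Hin as [Hin|Hin];
    apply in_map_iff in Hin; destruct Hin as [x [<- Hx]]; simpl; split; auto.
Qed.

Lemma del_valid n t : tvalid n t -> forall t', In t' (del t) -> tvalid n t'.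
Proof. induction t as [v|l IHl r IHr]; simpl; intros Ht t' Hin; [tauto|].
  destruct Ht as [Hl Hr]. apply in_app_or in Hin. destruct Hin as [Hin|Hin].
  - destruct l; simpl in Hin.
    + destruct Hin as [<-|[]]; auto.
    + apply in_map_iff in Hin; destruct Hin as [x [<- Hx]]; simpl; split; auto.
  - destruct r; simpl in Hin.
    + destruct Hin as [<-|[]]; auto.
    + apply in_map_iff in Hin; destruct Hin as [x [<- Hx]]; simpl; split; auto.
Qed.

Lemma del_size t : forall t', In t' (del t) -> (tsize t' < tsize t)%nat.
Proof. induction t as [v|l IHl r IHr]; simpl; intros t' Hin; [tauto|].
  apply in_app_or in Hin. destruct Hin as [Hin|Hin].
  - destruct l; simpl in Hin.
    + destruct Hin as [<-|[]]; simpl; lia.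
    + apply in_map_iff in Hin; destruct Hin as [x [<- Hx]]. simpl.
      specialize (IHl x Hx). simpl in IHl. lia.
  - destruct r; simpl in Hin.
    + destruct Hin as [<-|[]]; simpl; lia.
    + apply in_map_iff in Hin; destruct Hin as [x [<- Hx]]. simpl.
      specialize (IHr x Hx). simpl in IHr. lia.
Qed.

Lemma del_nonempty l r : del (Join l r) <> [].
Proof. revert r. induction l as [v|l1 IH1 l2 IH2]; intros r.
  - simpl. discriminate.
  - intros H. change (map (fun l' => Join l' r) (del (Join l1 l2)) ++
      (match r with Leaf _ => [Join l1 l2] | _ => map (Join (Join l1 l2)) (del r) end) = []) in H.
    apply app_eq_nil in H. destruct H as [H _].
    apply map_eq_nil in H. exact (IH1 l2 H).
Qed.

Lemma hvl_nonneg n X : nonneg (hvl n X).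
Proof. unfold hvl. assert (0 <= 1/3) by lra.
  repeat apply nonneg_app; apply nonneg_dscale; auto;
  destruct X as [t|]; simpl; try apply nonneg_uniform; try apply nonneg_dret.
  destruct t; [apply nonneg_dret|apply nonneg_uniform]. Qed.

Lemma hvl_valid n X : valid n X -> Sup (hvl n X) (valid n).
Proof. intros HX. unfold hvl.
  repeat apply Sup_app; apply Sup_dscale; destruct X as [t|]; simpl in *.
  - apply Sup_uniform. intros x Hx. apply in_flat_map in Hx. destruct Hx as [u [Hu Hx]].
    apply in_map_iff in Hx. destruct Hx as [t' [<- Ht']]. simpl.
    eapply subs_valid; eauto. apply lits_valid; auto.
  - apply Sup_dret; simpl; auto.
  - apply Sup_uniform. intros x Hx. apply in_flat_map in Hx. destruct Hx as [u [Hu Hx]].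
    apply in_map_iff in Hx. destruct Hx as [t' [<- Ht']]. simpl.
    eapply ins_valid; eauto. apply lits_valid; auto.
  - apply Sup_uniform. intros x Hx. apply in_map_iff in Hx. destruct Hx as [u [<- Hu]].
    simpl. apply lits_valid; auto.
  - destruct t.
    + apply Sup_dret; simpl; auto.
    + apply Sup_uniform. intros x Hx. apply in_map_iff in Hx. destruct Hx as [t' [<- Ht']].
      simpl. eapply del_valid; eauto.
  - apply Sup_dret; simpl; auto.
Qed.

Lemma hvl_mass n X : E (hvl n X) (fun _ => 1) <= 1.
Proof. unfold hvl. rewrite !E_app, !E_dscale.
  assert (H1 : E (substitute_d n X) (fun _ => 1) <= 1).
  { destruct X; simpl; [apply mass_uniform| rewrite E_dret; lra]. }
  assert (H2 : E (insert_d n X) (fun _ => 1) <= 1).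
  { destruct X; simpl; apply mass_uniform. }
  assert (H3 : E (delete_d X) (fun _ => 1) <= 1).
  { destruct X as [[]|]; simpl; try (rewrite E_dret; lra). apply mass_uniform. }
  lra. Qed.

Lemma hvl_iter_props n m X :
  nonneg (hvl_iter n m X) /\ E (hvl_iter n m X) (fun _ => 1) <= 1 /\
  (valid n X -> Sup (hvl_iter n m X) (valid n)).
Proof. induction m as [|m [IH1 [IH2 IH3]]]; simpl.
  - split; [apply nonneg_dret|split; [rewrite E_dret; lra| apply Sup_dret]].
  - split; [apply nonneg_dbind; auto; intros; apply hvl_nonneg|split].
    + rewrite E_dbind. apply E_sup_le; auto; [lra|]. intros pq _. apply hvl_mass.
    + intros HX. apply Sup_dbind. intros pq Hpq. apply hvl_valid. exact (IH3 HX pq Hpq).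
Qed.

Lemma exp1_ge J : sum_f_R0 (fun i => / INR (fact i) * 1 ^ i) J <= exp 1.
Proof. apply (growing_ineq (fun N => sum_f_R0 (fun i => / INR (fact i) * 1 ^ i) N)).
  - intros N. rewrite tech5. rewrite pow1, Rmult_1_r.
    assert (0 < / INR (fact (S N))) by (apply Rinv_0_lt_compat, INR_fact_lt_0). lra.
  - exact (proj2_sig (exist_exp 1)).
Qed.

Lemma sum_seq_fact J :
  sumR (map (fun j => / INR (fact j)) (seq 0 (S J))) = sum_f_R0 (fun i => / INR (fact i) * 1 ^ i) J.
Proof. induction J.
  - unfold sumR; simpl. ring.
  - rewrite seq_S, map_app, sumR_app, IHJ. rewrite tech5. rewrite pow1. simpl map. unfold sumR; simpl fold_right. rewrite Rplus_0_r, Rmult_1_r; reflexivity.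
Qed.

Lemma mutate_props a n J X :
  nonneg (mutate a n J X) /\ E (mutate a n J X) (fun _ => 1) <= 1 /\
  (valid n X -> Sup (mutate a n J X) (valid n)).
Proof. destruct a; unfold mutate.
  - split; [apply hvl_nonneg|split; [apply hvl_mass|apply hvl_valid]].
  - assert (He : 0 < exp (-1)) by apply exp_pos.
    split; [|split].
    + apply nonneg_flat_map. intros j _. apply nonneg_dscale.
      * unfold Rdiv; apply Rmult_le_pos; [lra|]. apply Rlt_le, Rinv_0_lt_compat, INR_fact_lt_0.
      * apply hvl_iter_props.
    + rewrite E_flat_map.
      apply Rle_trans with (sumR (map (fun j => exp (-1) * / INR (fact j)) (seq 0 (S J)))).
      * apply sumR_le. intros j _. rewrite E_dscale. unfold Rdiv.
        rewrite <- (Rmult_1_r (exp (-1) * / INR (fact j))) at 2.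
        apply Rmult_le_compat_l; [|apply hvl_iter_props].
        apply Rmult_le_pos; [lra|]. apply Rlt_le, Rinv_0_lt_compat, INR_fact_lt_0.
      * rewrite sumR_scale, sum_seq_fact.
        apply Rle_trans with (exp (-1) * exp 1).
        -- apply Rmult_le_compat_l; [lra|apply exp1_ge].
        -- rewrite <- exp_plus. replace (-1 + 1) with 0 by ring. rewrite exp_0. lra.
    + intros HX. apply Sup_flat_map. intros j _. apply Sup_dscale. apply hvl_iter_props; auto.
Qed.

Definition ind (b : bool) : R := if b then 1 else 0.

Lemma ind_nonneg b : 0 <= ind b.
Proof. destruct b; simpl; lra. Qed.

Lemma mutate_good a n J t :
  exp (-1) / 3 <= E (mutate a n J (Some t)) (fun Y => ind (cplx Y <? tsize t)%nat).
Proof.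
  set (h := fun Y => ind (cplx Y <? tsize t)%nat).
  assert (Hh : forall Y, 0 <= h Y) by (intros; apply ind_nonneg).
  assert (Hdel : E (delete_d (Some t)) h = 1).
  { destruct t as [u|l r].
    - simpl. rewrite E_dret. unfold h; simpl. reflexivity.
    - change (delete_d (Some (Join l r))) with (uniform (map Some (del (Join l r)))).
      rewrite E_uniform, length_map, map_map.
      rewrite (sumR_ext_in _ (fun x => h (Some x)) (fun _ => 1)).
      + rewrite sumR_const. apply Rinv_l. apply not_0_INR.
        generalize (del_nonempty l r). destruct (del (Join l r)); simpl; [tauto|lia].
      + intros x Hx. apply del_size in Hx. unfold h, ind. simpl cplx.
        apply Nat.ltb_lt in Hx. rewrite Hx. reflexivity. }
  assert (Hhvl : 1 / 3 <= E (hvl n (Some t)) h).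
  { unfold hvl. rewrite !E_app, !E_dscale, Hdel.
    assert (0 <= E (substitute_d n (Some t)) h).
    { apply E_nonneg; [simpl; apply nonneg_uniform|intros ??; auto]. }
    assert (0 <= E (insert_d n (Some t)) h).
    { apply E_nonneg; [simpl; apply nonneg_uniform|intros ??; auto]. }
    lra. }
  assert (He : 0 < exp (-1)) by apply exp_pos.
  assert (He1 : exp (-1) <= 1).
  { rewrite <- exp_0. destruct (Rle_dec (exp (-1)) (exp 0)); auto. exfalso.
    apply Rnot_le_lt in n0. apply exp_lt_inv in n0. lra. }
  destruct a; unfold mutate.
  - fold h. lra.
  - fold h. rewrite E_flat_map. simpl seq. simpl map. unfold sumR; simpl fold_right.
    fold (sumR (map (fun x => E (dscale (exp (-1) / INR (fact x)) (hvl_iter n (S x) (Some t))) h) (seq 1 J))).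
    assert (0 <= sumR (map (fun x => E (dscale (exp (-1) / INR (fact x)) (hvl_iter n (S x) (Some t))) h) (seq 1 J))).
    { apply sumR_nonneg. intros j _. apply E_nonneg; [|intros ??; auto].
      apply nonneg_dscale; [|apply hvl_iter_props].
      unfold Rdiv; apply Rmult_le_pos; [lra|]. apply Rlt_le, Rinv_0_lt_compat, INR_fact_lt_0. }
    match goal with |- _ <= ?A + ?B => assert (HB : 0 <= B) by exact H end.
    rewrite E_dscale, E_app, E_dscale. replace (E [] h) with 0 by reflexivity.
    replace (exp (-1) / 1) with (exp (-1)) by field.
    assert (exp (-1) * (1/3) <= exp (-1) * E (hvl n (Some t)) h) by (apply Rmult_le_compat_l; lra).
    lra.
Qed.

Definition cmin (P : list stree) : nat :=
  fold_right (fun X m => Nat.min (cplx X) m) (cplx (hd None P)) P.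

Lemma fold_min_le b (l : list stree) :
  (fold_right (fun X m => Nat.min (cplx X) m) b l <= b)%nat /\
  forall X, In X l -> (fold_right (fun X m => Nat.min (cplx X) m) b l <= cplx X)%nat.
Proof. induction l as [|Y l [IH1 IH2]]; simpl; [split; [lia| tauto]|].
  split; [lia|]. intros X [<-|HX]; [lia|]. specialize (IH2 X HX). lia. Qed.

Lemma fold_min_att b (l : list stree) :
  fold_right (fun X m => Nat.min (cplx X) m) b l = b \/
  exists X, In X l /\ fold_right (fun X m => Nat.min (cplx X) m) b l = cplx X.
Proof. induction l as [|Y l IH]; simpl; [auto|].
  destruct (Nat.min_spec (cplx Y) (fold_right (fun X m => Nat.min (cplx X) m) b l)) as [[_ ->]|[_ ->]].
  - right; exists Y; auto.
  - destruct IH as [IH|[X [HX IH]]]; [left; auto| right; exists X; auto]. Qed.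

Lemma cmin_le P X : In X P -> (cmin P <= cplx X)%nat.
Proof. intros H. apply fold_min_le; auto. Qed.

Lemma cmin_att P : P <> [] -> exists X, In X P /\ cplx X = cmin P.
Proof. intros H. unfold cmin. destruct (fold_min_att (cplx (hd None P)) P) as [E1|[X [HX E1]]].
  - exists (hd None P). split; [destruct P; simpl; auto; congruence| auto].
  - exists X; auto. Qed.

Definition Inv (n : nat) (F : stree -> R) (P : list stree) : Prop :=
  P <> [] /\ (forall X, In X P -> valid n X) /\ NoDup (map F P).

Lemma Rleb_true x y : Rleb x y = true <-> x <= y.
Proof. unfold Rleb; destruct (Rle_dec x y); split; auto; discriminate. Qed.
Lemma Rleb_refl x : Rleb x x = true.
Proof. apply Rleb_true; lra. Qed.

Lemma NoDup_map_filter {A B} (F : A -> B) f (l : list A) :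
  NoDup (map F l) -> NoDup (map F (filter f l)).
Proof. induction l; simpl; intros H; auto. inversion H; subst.
  destruct (f a); simpl; auto. constructor; auto. intros Hin. apply H2.
  apply in_map_iff in Hin. destruct Hin as [x [Hx Hin]]. apply filter_In in Hin.
  rewrite <- Hx. apply in_map. tauto. Qed.

Lemma update_inv n F P Y : Inv n F P -> valid n Y -> Inv n F (update F P Y).
Proof. intros [HP [Hv Hd]] HY. unfold update.
  destruct (existsb (fun Z => sdom F Z Y) P) eqn:Hex; [split; auto|].
  split; [discriminate|split].
  - intros X [<-|HX]; auto. apply filter_In in HX. apply Hv; tauto.
  - simpl. constructor; [|apply NoDup_map_filter; auto].
    intros Hin. apply in_map_iff in Hin. destruct Hin as [Z [HZ Hin]].
    apply filter_In in Hin. destruct Hin as [HZP Hw].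
    assert (Hs : sdom F Z Y = false).
    { destruct (sdom F Z Y) eqn:E1; auto. exfalso.
      assert (existsb (fun Z => sdom F Z Y) P = true) by (apply existsb_exists; eauto). congruence. }
    unfold wdom in Hw. unfold sdom, wdom in Hs. rewrite HZ, Rleb_refl in *. simpl in *.
    destruct (Nat.leb (cplx Y) (cplx Z)) eqn:E1; [discriminate|].
    apply Nat.leb_gt in E1.
    rewrite (proj2 (Nat.leb_le _ _)) in Hs by lia.
    rewrite (proj2 (Nat.ltb_lt _ _)) in Hs by lia.
    rewrite Bool.orb_true_r in Hs. discriminate.
Qed.

Lemma update_cmin_le F P Y : P <> [] -> (cmin (update F P Y) <= cmin P)%nat.
Proof. intros HP. unfold update.
  destruct (existsb (fun Z => sdom F Z Y) P) eqn:Hex; [lia|].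
  destruct (cmin_att P HP) as [X [HX EX]].
  destruct (wdom F Y X) eqn:Hw.
  - unfold wdom in Hw. apply andb_prop in Hw. destruct Hw as [_ Hw]. apply Nat.leb_le in Hw.
    assert (cmin (Y :: filter (fun Z => negb (wdom F Y Z)) P) <= cplx Y)%nat
      by (apply cmin_le; simpl; auto). lia.
  - assert (cmin (Y :: filter (fun Z => negb (wdom F Y Z)) P) <= cplx X)%nat.
    { apply cmin_le; simpl; right. apply filter_In. rewrite Hw; auto. }
    lia.
Qed.

Lemma update_good F P Y : P <> [] -> (cplx Y < cmin P)%nat ->
  (cmin (update F P Y) < cmin P)%nat.
Proof. intros HP HY. unfold update.
  destruct (existsb (fun Z => sdom F Z Y) P) eqn:Hex.
  - exfalso. apply existsb_exists in Hex. destruct Hex as [Z [HZ Hs]].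
    unfold sdom, wdom in Hs. apply andb_prop in Hs. destruct Hs as [Hs _].
    apply andb_prop in Hs. destruct Hs as [_ Hs]. apply Nat.leb_le in Hs.
    apply cmin_le in HZ. lia.
  - assert (cmin (Y :: filter (fun Z => negb (wdom F Y Z)) P) <= cplx Y)%nat
      by (apply cmin_le; simpl; auto). lia.
Qed.

Lemma inv_length n F k P : at_most_k_values n F k -> Inv n F P -> (1 <= length P <= k)%nat.
Proof. intros [vals [Hl Hv]] [HP [HPv Hd]]. split.
  - destruct P; [congruence|simpl; lia].
  - rewrite <- (length_map F P). eapply Nat.le_trans; [|exact Hl].
    apply NoDup_incl_length; auto. intros x Hx. apply in_map_iff in Hx.
    destruct Hx as [X [<- HX]]. apply Hv, HPv; auto.
Qed.

Lemma has_empty_false P : has_empty P = false -> forall X, In X P -> X <> None.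
Proof. intros H X HX ->. assert (has_empty P = true); [|congruence].
  apply existsb_exists. exists None; auto. Qed.

Lemma step_props a n J F P : Inv n F P ->
  nonneg (step a n J F P) /\ (E (step a n J F P) (fun _ => 1) <= 1) /\
  (Sup (step a n J F P) (fun q => Inv n F q /\ (cmin q <= cmin P)%nat)).
Proof. intros HI. unfold step. split; [|split].
  - apply nonneg_dbind; [apply nonneg_uniform|]. intros X. apply nonneg_dmap, mutate_props.
  - rewrite E_dbind. apply Rle_trans with (E (uniform P) (fun _ => 1)); [|apply mass_uniform].
    apply E_mono; [apply nonneg_uniform|]. apply Sup_uniform. intros X HX.
    rewrite E_dmap. apply mutate_props.
  - apply Sup_dbind. apply Sup_uniform. intros X HX. apply Sup_dmap.
    destruct HI as [HP [Hv Hd]].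
    generalize (proj2 (proj2 (mutate_props a n J X)) (Hv X HX)). intros HS pq Hpq.
    split; [apply update_inv; [split; auto| exact (HS pq Hpq)]|].
    apply update_cmin_le; auto.
Qed.

Lemma step_good a n J F k P : at_most_k_values n F k -> Inv n F P -> has_empty P = false ->
  exp (-1) / (3 * INR k) <= E (step a n J F P) (fun q => ind (cmin q <? cmin P)%nat).
Proof. intros Hk HI He. destruct (inv_length n F k P Hk HI) as [L1 L2].
  destruct HI as [HP [Hv Hd]].
  destruct (cmin_att P HP) as [Xm [HXm EXm]].
  destruct Xm as [t|]; [|exfalso; exact (has_empty_false P He None HXm eq_refl)].
  unfold step. rewrite E_dbind, E_uniform.
  set (h' := fun X => E (dmap (update F P) (mutate a n J X)) (fun q => ind (cmin q <? cmin P)%nat)).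
  assert (Hh' : forall X, 0 <= h' X).
  { intros X. unfold h'. apply E_nonneg; [apply nonneg_dmap, mutate_props|].
    intros ??; apply ind_nonneg. }
  assert (Hm : exp (-1) / 3 <= h' (Some t)).
  { eapply Rle_trans; [apply (mutate_good a n J t)|]. unfold h'. rewrite E_dmap.
    apply E_mono; [apply mutate_props|]. intros pq _.
    simpl in EXm. rewrite EXm. destruct (cplx (snd pq) <? cmin P)%nat eqn:E1.
    - apply Nat.ltb_lt in E1. apply (update_good F P) in E1; auto.
      apply Nat.ltb_lt in E1. rewrite E1. lra.
    - simpl. apply ind_nonneg. }
  assert (Hs : exp (-1) / 3 <= sumR (map h' P)).
  { eapply Rle_trans; [exact Hm|]. apply sumR_in; auto. }
  assert (He1 : 0 < exp (-1)) by apply exp_pos.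
  assert (Hk1 : 0 < INR (length P)) by (apply lt_0_INR; lia).
  assert (Hk2 : INR (length P) <= INR k) by (apply le_INR; lia).
  assert (/ INR k <= / INR (length P)) by (apply Rinv_le_contravar; auto).
  replace (exp (-1) / (3 * INR k)) with (/ INR k * (exp (-1) / 3)) by (field; lra).
  apply Rmult_le_compat; auto.
  - apply Rlt_le, Rinv_0_lt_compat; lra.
  - lra.
Qed.


Definition Ssum a n J F T P := sumR (map (fun t => pnothit a n J F t P) (seq 0 T)).

Lemma Ssum_empty a n J F T P : has_empty P = true -> Ssum a n J F T P = 0.
Proof. intros H. unfold Ssum. rewrite (sumR_ext _ _ (fun _ => 0 * 1)).
  - rewrite sumR_scale; ring.
  - intros t. destruct t; cbn [pnothit]; rewrite H; ring. Qed.

Lemma Ssum_succ a n J F T P : has_empty P = false ->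
  Ssum a n J F (S T) P = 1 + E (step a n J F P) (Ssum a n J F T).
Proof. intros H. unfold Ssum. rewrite <- cons_seq. rewrite <- seq_shift.
  simpl map at 1. unfold sumR at 1. simpl fold_right.
  fold (sumR (map (fun t => pnothit a n J F t P) (map S (seq 0 T)))).
  rewrite H.
  f_equal. rewrite map_map.
  rewrite (sumR_ext _ _ (fun t => sumR (map (fun pq => fst pq * pnothit a n J F t (snd pq)) (step a n J F P)))).
  2:{ intros t. cbn [pnothit]. rewrite H. reflexivity. }
  rewrite (sumR_swap (seq 0 T) (step a n J F P) (fun t pq => fst pq * pnothit a n J F t (snd pq))).
  unfold E. apply sumR_ext. intros pq. apply sumR_scale.
Qed.

Lemma main_bound a n J F k : at_most_k_values n F k ->
  forall T P, Inv n F P -> Ssum a n J F T P <= 3 * exp 1 * INR k * INR (cmin P).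
Proof. intros Hk T. induction T as [|T IH]; intros P HI.
  - unfold Ssum; simpl. unfold sumR; simpl.
    destruct (inv_length n F k P Hk HI).
    assert (0 < exp 1) by apply exp_pos.
    assert (0 <= INR k) by apply pos_INR. assert (0 <= INR (cmin P)) by apply pos_INR.
    assert (0 <= 3 * exp 1 * INR k) by (repeat apply Rmult_le_pos; lra).
    apply Rmult_le_pos; lra.
  - destruct (inv_length n F k P Hk HI) as [L1 L2].
    set (A := 3 * exp 1 * INR k).
    assert (HA : 0 < A).
    { unfold A. assert (0 < exp 1) by apply exp_pos.
      assert (0 < INR k) by (apply lt_0_INR; lia).
      repeat apply Rmult_lt_0_compat; lra. }
    assert (Hc : 0 <= INR (cmin P)) by apply pos_INR.
    destruct (has_empty P) eqn:He.
    + rewrite Ssum_empty by auto. apply Rmult_le_pos; lra.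
    + rewrite Ssum_succ by auto.
      destruct (step_props a n J F P HI) as [Hnn [Hmass Hsup]].
      set (m := cmin P).
      set (g := fun q => ind (cmin q <? m)%nat).
      assert (Hgood := step_good a n J F k P Hk HI He). fold m in Hgood. fold g in Hgood.
      assert (H1 : E (step a n J F P) (Ssum a n J F T) <=
                   E (step a n J F P) (fun q => A * INR m - A * g q)).
      { apply E_mono; auto. intros pq Hpq. destruct (Hsup pq Hpq) as [HIq Hq].
        eapply Rle_trans; [apply IH; auto|]. unfold g.
        rewrite <- Rmult_minus_distr_l. apply Rmult_le_compat_l; [lra|].
        destruct (cmin (snd pq) <? m)%nat eqn:E1; simpl.
        - apply Nat.ltb_lt in E1. apply le_INR in E1. rewrite S_INR in E1. lra.
        - apply Nat.ltb_ge in E1. assert (cmin (snd pq) = m) by (unfold m in *; lia).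
          rewrite H. lra. }
      assert (Hc1 : E (step a n J F P) (fun _ => A * INR m) = A * INR m * E (step a n J F P) (fun _ => 1))
        by (rewrite <- E_scale; unfold E; apply sumR_ext; intros; ring).
      assert (Hc2 : E (step a n J F P) (fun x => A * g x) = A * E (step a n J F P) g) by apply E_scale.
      rewrite E_minus, Hc1, Hc2 in H1.
      assert (Hp : A * (exp (-1) / (3 * INR k)) = 1).
      { assert (Hee : exp (-1) * exp 1 = 1).
        { rewrite <- exp_plus. replace (-1 + 1) with 0 by ring. apply exp_0. }
        rewrite <- Hee. unfold A. field. apply not_0_INR; lia. }
      assert (A * INR m * E (step a n J F P) (fun _ => 1) <= A * INR m).
      { rewrite <- (Rmult_1_r (A * INR m)) at 2. apply Rmult_le_compat_l; auto.
        apply Rmult_le_pos; [lra|apply pos_INR]. }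
      assert (A * (exp (-1) / (3 * INR k)) <= A * E (step a n J F P) g)
        by (apply Rmult_le_compat_l; lra).
      fold A. lra.
Qed.

Theorem lemma1 :
  exists c : R, 0 < c /\
    forall (a : algo) (n : nat) (F : stree -> R) (k : nat) (X0 : stree),
      (1 <= n)%nat ->
      at_most_k_values n F k ->
      valid n X0 ->
      expected_hit_le a n F X0 (c * INR k * INR (cplx X0)).
Proof.
  exists (3 * exp 1). split.
  - assert (0 < exp 1) by apply exp_pos. lra.
  - intros a n F k X0 Hn Hk HX0 J T.
    assert (HI : Inv n F [X0]).
    { split; [discriminate|split].
      - intros X [<-|[]]; auto.
      - simpl. constructor; [simpl; tauto| constructor]. }
    generalize (main_bound a n J F k Hk T [X0] HI). unfold Ssum.
    replace (cmin [X0]) with (cplx X0); [auto|].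
    unfold cmin; simpl. lia.
Qed.
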